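(* Let $X$ be a uniform space equipped with a uniformly continuous action of a group $\Gamma$. Let $Y$ be a closed subset of $X$. Suppose that there is a net $(Z_i)_{i \in I}$ of $\Gamma$-invariant subsets of $X$ converging to $Y$ in the Hausdorff-Bourbaki topology. Then $Y$ is $\Gamma$-invariant.
   Context: An action of $\Gamma$ on $X$ is uniformly continuous if each map $x \mapsto \gamma x$, $\gamma \in \Gamma$, is uniformly continuous. For $V \subset X \times X$ and $A \subset X$, $V[A] = \{x \in X : (x,a) \in V \text{ for some } a \in A\}$. The Hausdorff-Bourbaki uniform structure on the set $\mathcal{P}(X)$ of all subsets of $X$ has as a base the sets $\widehat{V} = \{(A,B) : B \subset V[A] \text{ and } A \subset V[B]\}$, $V$ an entourage of $X$; the Hausdorff-Bourbaki topology is its associated topology. *)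

(* Defs.v *)
From HB Require Import structures.
From mathcomp Require Import all_boot monoid.
From mathcomp Require Import all_classical topology.
Set Implicit Arguments. Unset Strict Implicit. Unset Printing Implicit Defensive.
Local Open Scope classical_set_scope.

Definition is_action (G : groupType) (X : Type) (act : G -> X -> X) : Prop :=
  (forall x, act (monoid.one : G) x = x) /\
  (forall g h x, act (monoid.mul g h) x = act g (act h x)).

Definition unif_continuous_action (G : groupType) (X : uniformType)
  (act : G -> X -> X) : Prop :=
  forall g : G, unif_continuous (act g).

Definition gamma_invariant (G : groupType) (X : Type) (act : G -> X -> X)
  (Z : set X) : Prop :=
  forall g : G, act g @` Z = Z.

Definition ent_image (X : Type) (V : set (X * X)) (A : set X) : set X :=
  [set x | exists2 a, A a & V (x, a)].

Definition hb_entourage (X : Type) (V : set (X * X)) : set (set X * set X) :=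
  [set AB | AB.2 `<=` ent_image V AB.1 /\ AB.1 `<=` ent_image V AB.2].

Definition directed (I : Type) (le : I -> I -> Prop) : Prop :=
  (exists i : I, True) /\
  (forall i, le i i) /\
  (forall i j k, le i j -> le j k -> le i k) /\
  (forall i j, exists k, le i k /\ le j k).

Definition hb_net_converges (X : uniformType) (I : Type) (le : I -> I -> Prop)
  (Z : I -> set X) (Y : set X) : Prop :=
  forall V : set (X * X), entourage V ->
    exists i0 : I, forall i, le i0 i -> hb_entourage V (Y, Z i).

(* Main.v *)
Require Import Defs.
From HB Require Import structures.
From mathcomp Require Import all_boot monoid.
From mathcomp Require Import all_classical topology.
Local Open Scope classical_set_scope.

Lemma sub_inv (G : groupType) (X : uniformType) (act : G -> X -> X)
  (Hunif : unif_continuous_action act)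
  (Y : set X) (HY : closed Y)
  (I : Type) (le : I -> I -> Prop) (Z : I -> set X)
  (HZ : forall i, gamma_invariant act (Z i))
  (Hdir : directed le) (Hconv : hb_net_converges le Z Y) g : act g @` Y `<=` Y.
Proof.
move=> _ [y Yy <-].
rewrite (closure_id Y).1 //.
move=> B /nbhsP [W entW sWB].
have [entW' W'W] := split_entP entW.
set W' := split_ent W in entW' W'W.
have entU : entourage [set xy : X * X | W' (act g xy.1, act g xy.2)].
  exact: (Hunif g W' entW').
have entV : entourage ([set xy : X * X | W' (act g xy.1, act g xy.2)] `&` W') by apply: filterI.
have [i0 Hi0] := Hconv _ entV.
have [HZY HYZ] := Hi0 i0 (proj1 (proj2 Hdir) i0).
have [a Za Vya] := HYZ y Yy.
have Zga : Z i0 (act g a) by rewrite -(HZ i0 g); exists a.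
have [b Yb Vab] := HZY _ Zga.
exists b; split => //.
apply: sWB; rewrite /xsection /= inE.
apply: W'W; exists (act g a).
- exact: Vya.1.
- exact: Vab.2.
Qed.

Theorem corollary3p7 (G : groupType) (X : uniformType) (act : G -> X -> X)
  (Hact : is_action act) (Hunif : unif_continuous_action act)
  (Y : set X) (HY : closed Y)
  (I : Type) (le : I -> I -> Prop) (Hdir : directed le) (Z : I -> set X)
  (HZ : forall i, gamma_invariant act (Z i))
  (Hconv : hb_net_converges le Z Y) :
  gamma_invariant act Y.
Proof.
move=> g; apply/seteqP; split; first (move=> x Hx; exact: (@sub_inv _ _ _ Hunif _ HY _ _ _ HZ Hdir Hconv g) Hx).
move=> y Yy; exists (act (monoid.inv g) y).
  exact: (@sub_inv _ _ _ Hunif _ HY _ _ _ HZ Hdir Hconv (monoid.inv g)) (ex_intro2 _ _ y Yy erefl).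
by rewrite -(proj2 Hact) mulgV (proj1 Hact).
Qed.
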